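(* Let $\mathcal{P}=\langle \mathrm{Pr},A,\to\rangle$ be a process LTS and $\mathcal{E}=\langle \mathrm{Env},A,\Rightarrow\rangle$ an environment LTS. For all processes $p,q\in\mathrm{Pr}$ and all environments $e\in\mathrm{Env}$: (1) $p \le_e q \iff (p \mathbin{\&_\bullet} e) \le (q \mathbin{\&_\bullet} e) \implies (p \mathbin{\&} e)\le (q\mathbin{\&} e) \iff p \le^{ji}_e q$; (2) $p \sim_e q \iff (p \mathbin{\&_\bullet} e) \sim (q \mathbin{\&_\bullet} e) \implies (p \mathbin{\&} e)\sim (q\mathbin{\&} e) \iff p \sim^{ji}_e q$. Here $p\mathbin{\&_\bullet}e$, $q\mathbin{\&_\bullet}e$ are states of the right-determinizing join LTS $\mathcal{P}\mathbin{\&_\bullet}\mathcal{E}$ and $p\mathbin{\&}e$, $q\mathbin{\&}e$ are states of the join LTS $\mathcal{P}\mathbin{\&}\mathcal{E}$; $\le$ and $\sim$ denote simulatability and bisimilarity in the respective LTS.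
   Context: A labeled transition system (LTS) is a triple $\langle \mathrm{St},A,\to\rangle$ with a set of states $\mathrm{St}$, a set of actions $A$, and a transition relation $\to\subseteq \mathrm{St}\times A\times \mathrm{St}$; write $s\xrightarrow{a}t$. A process LTS $\mathcal{P}=\langle \mathrm{Pr},A,\to\rangle$ has states called processes; an environment LTS $\mathcal{E}=\langle\mathrm{Env},A,\Rightarrow\rangle$ (same action set) has states called environments, transitions written $e\xRightarrow{a}e'$. A simulation on an LTS is a nonempty relation $S$ on states such that whenever $s\,S\,t$ and $s\xrightarrow{a}s'$, there is $t'$ with $t\xrightarrow{a}t'$ and $s'\,S\,t'$ (forth). A bisimulation is a nonempty relation $B$ such that both $B$ and its converse are simulations (forth and back). $s\le t$ (simulatability) iff some simulation relates $s$ to $t$; $s\sim t$ (bisimilarity) iff some bisimulation relates them. An $\mathcal{E}$-parameterized simulation on $\mathcal{P}$ is a family $(S_f)_{f\in\mathrm{Env}}$ of nonempty relations $S_f\subseteq\mathrm{Pr}\times\mathrm{Pr}$ such that whenever $p\,S_e\,q$ and $e\xRightarrow{a}e'$ and $p\xrightarrow{a}p'$, there is $q'$ with $q\xrightarrow{a}q'$ and $p'\,S_{e'}\,q'$. An $\mathcal{E}$-parameterized bisimulation is a family $(B_f)_{f\in\mathrm{Env}}$ of nonempty relations such that whenever $p\,B_e\,q$ and $e\xRightarrow{a}e'$: (forth) every $p\xrightarrow{a}p'$ is matched by some $q\xrightarrow{a}q'$ with $p'\,B_{e'}\,q'$, and (back) every $q\xrightarrow{a}q'$ is matched by some $p\xrightarrow{a}p'$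 with $p'\,B_{e'}\,q'$. Write $p\le_e q$ (parameterized simulatability) if some $\mathcal{E}$-parameterized simulation has $p\,S_e\,q$, and $p\sim_e q$ (parameterized bisimilarity) if some $\mathcal{E}$-parameterized bisimulation has $p\,B_e\,q$. The join LTS of two LTSs $\langle \mathrm{St}_1,A,\to_1\rangle$, $\langle \mathrm{St}_2,A,\to_2\rangle$ has states formal pairs $s_1\mathbin{\&}s_2$ ($s_i\in\mathrm{St}_i$) and transitions $s_1\mathbin{\&}s_2\xrightarrow{a}s_1'\mathbin{\&}s_2'$ iff $s_1\xrightarrow{a}_1 s_1'$ and $s_2\xrightarrow{a}_2 s_2'$. The right-determinizing join LTS $\mathcal{P}\mathbin{\&_\bullet}\mathcal{E}$ has states $p\mathbin{\&_\bullet}e$, action set $A\times\mathrm{Env}$, and transitions $p\mathbin{\&_\bullet}e\xrightarrow{(a,e')}p'\mathbin{\&_\bullet}e'$ iff $p\xrightarrow{a}p'$ and $e\xRightarrow{a}e'$. Ji-parameterized relations: $p\le^{ji}_e q$ iff $p\mathbin{\&}e\le q\mathbin{\&}e$ in $\mathcal{P}\mathbin{\&}\mathcal{E}$; $p\sim^{ji}_e q$ iff $p\mathbin{\&}e\sim q\mathbin{\&}e$; $p\simeq^{ji}_e q$ iff $p\le^{ji}_e q$ and $q\le^{ji}_e p$. *)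

(* Defs.v *)
Set Implicit Arguments.

Definition lts (St Act : Type) := St -> Act -> St -> Prop.

Definition nonempty_rel (X : Type) (R : X -> X -> Prop) : Prop :=
  exists s t, R s t.

Definition is_simulation (St Act : Type) (tr : lts St Act) (S : St -> St -> Prop) : Prop :=
  nonempty_rel S /\
  forall s t a s', S s t -> tr s a s' -> exists t', tr t a t' /\ S s' t'.

Definition is_bisimulation (St Act : Type) (tr : lts St Act) (B : St -> St -> Prop) : Prop :=
  is_simulation tr B /\ is_simulation tr (fun s t => B t s).

Definition simulatable (St Act : Type) (tr : lts St Act) (s t : St) : Prop :=
  exists S, is_simulation tr S /\ S s t.

Definition bisimilar (St Act : Type) (tr : lts St Act) (s t : St) : Prop :=
  exists B, is_bisimulation tr B /\ B s t.

Definition is_param_simulation (Pr Env A : Type) (trP : lts Pr A) (trE : lts Env A)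
  (S : Env -> Pr -> Pr -> Prop) : Prop :=
  (forall f, nonempty_rel (S f)) /\
  forall e e' a p q p', S e p q -> trE e a e' -> trP p a p' ->
    exists q', trP q a q' /\ S e' p' q'.

Definition is_param_bisimulation (Pr Env A : Type) (trP : lts Pr A) (trE : lts Env A)
  (B : Env -> Pr -> Pr -> Prop) : Prop :=
  (forall f, nonempty_rel (B f)) /\
  forall e e' a p q, B e p q -> trE e a e' ->
    (forall p', trP p a p' -> exists q', trP q a q' /\ B e' p' q') /\
    (forall q', trP q a q' -> exists p', trP p a p' /\ B e' p' q').

Definition param_simulatable (Pr Env A : Type) (trP : lts Pr A) (trE : lts Env A)
  (e : Env) (p q : Pr) : Prop :=
  exists S, is_param_simulation trP trE S /\ S e p q.

Definition param_bisimilar (Pr Env A : Type) (trP : lts Pr A) (trE : lts Env A)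
  (e : Env) (p q : Pr) : Prop :=
  exists B, is_param_bisimulation trP trE B /\ B e p q.

Definition join_lts (S1 S2 A : Type) (tr1 : lts S1 A) (tr2 : lts S2 A) : lts (S1 * S2) A :=
  fun s a s' => tr1 (fst s) a (fst s') /\ tr2 (snd s) a (snd s').

(* Right-determinizing join P &. E: states (p, e), actions A * Env;
   (p,e) --(a,e')--> (p',e'') iff p -a-> p', e =a=> e' and e'' = e'. *)
Definition rdjoin_lts (Pr Env A : Type) (trP : lts Pr A) (trE : lts Env A)
  : lts (Pr * Env) (A * Env) :=
  fun s ae s' => trP (fst s) (fst ae) (fst s') /\ trE (snd s) (fst ae) (snd ae)
                 /\ snd s' = snd ae.

Definition ji_simulatable (Pr Env A : Type) (trP : lts Pr A) (trE : lts Env A)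
  (e : Env) (p q : Pr) : Prop :=
  simulatable (join_lts trP trE) (p, e) (q, e).

Definition ji_bisimilar (Pr Env A : Type) (trP : lts Pr A) (trE : lts Env A)
  (e : Env) (p q : Pr) : Prop :=
  bisimilar (join_lts trP trE) (p, e) (q, e).

(* Main.v *)
Require Import Defs.

Theorem lemma3p5 (Pr Env A : Type) (trP : lts Pr A) (trE : lts Env A)
  (p q : Pr) (e : Env) :
  ((param_simulatable trP trE e p q <-> simulatable (rdjoin_lts trP trE) (p, e) (q, e)) /\
   (simulatable (rdjoin_lts trP trE) (p, e) (q, e) ->
      simulatable (join_lts trP trE) (p, e) (q, e)) /\
   (simulatable (join_lts trP trE) (p, e) (q, e) <-> ji_simulatable trP trE e p q))
  /\
  ((param_bisimilar trP trE e p q <-> bisimilar (rdjoin_lts trP trE) (p, e) (q, e)) /\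
   (bisimilar (rdjoin_lts trP trE) (p, e) (q, e) ->
      bisimilar (join_lts trP trE) (p, e) (q, e)) /\
   (bisimilar (join_lts trP trE) (p, e) (q, e) <-> ji_bisimilar trP trE e p q)).
Proof.
  split; [split; [|split]|split; [|split]].
  - split.
    + intros [S [[Hne Hs] HS]].
      exists (fun s t => snd s = snd t /\ S (snd s) (fst s) (fst t)).
      split; [split|].
      * exists (p, e), (q, e); simpl; auto.
      * intros [x e1] [y e2] [a e'] [x' e''] [He HS'] [H1 [H2 H3]]; simpl in *.
        subst. destruct (Hs _ _ _ _ _ _ HS' H2 H1) as [y' [Hy Hy']].
        exists (y', e'); simpl; repeat split; auto.
      * simpl; auto.
    + intros [R [[Hne Hs] HR]].
      exists (fun f x y => R (x, f) (y, f) \/ x = y).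
      split; [split|].
      * intro f; exists p, p; auto.
      * intros e1 e' a x y x' [H|H] HE HP.
        -- assert (Hst : rdjoin_lts trP trE (x, e1) (a, e') (x', e'))
             by (repeat split; auto).
           destruct (Hs _ _ _ _ H Hst) as [[y' e''] [[H1 [H2 H3]] H4]]; simpl in *.
           subst. exists y'; auto.
        -- subst. exists x'; auto.
      * auto.
  - intros [R [[Hne Hs] HR]]. exists R. split; [split|]; auto. unfold join_lts.
    intros [x e1] [y e2] a [x' e'] xr [H1 H2]; simpl in *.
    assert (Hst : rdjoin_lts trP trE (x, e1) (a, e') (x', e'))
      by (repeat split; auto).
    destruct (Hs _ _ _ _ xr Hst) as [[y' e''] [[G1 [G2 G3]] G4]]; simpl in *.
    subst. exists (y', e'). split; [split|]; auto.
  - unfold ji_simulatable; tauto.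
  - split.
    + intros [B [[Hne Hs] HB]].
      exists (fun s t => snd s = snd t /\ B (snd s) (fst s) (fst t)).
      split; [split; split|].
      * exists (p, e), (q, e); simpl; auto.
      * intros [x e1] [y e2] [a e'] [x' e''] [He HS'] [H1 [H2 H3]]; simpl in *.
        subst. destruct (Hs _ _ _ _ _ HS' H2) as [Hf _].
        destruct (Hf _ H1) as [y' [Hy Hy']].
        exists (y', e'); simpl; repeat split; auto.
      * exists (q, e), (p, e); simpl; auto.
      * intros [y e2] [x e1] [a e'] [y' e''] [He HS'] [H1 [H2 H3]]; simpl in *.
        subst. destruct (Hs _ _ _ _ _ HS' H2) as [_ Hb].
        destruct (Hb _ H1) as [x' [Hx Hx']].
        exists (x', e'); simpl; repeat split; auto.
      * simpl; auto.
    + intros [R [[[Hne Hs] [Hne' Hs']] HR]].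
      exists (fun f x y => R (x, f) (y, f) \/ x = y).
      split; [split|].
      * intro f; exists p, p; auto.
      * intros e1 e' a x y [H|H] HE; split.
        -- intros x' HP.
           assert (Hst : rdjoin_lts trP trE (x, e1) (a, e') (x', e'))
             by (repeat split; auto).
           destruct (Hs _ _ _ _ H Hst) as [[y' e''] [[H1 [H2 H3]] H4]]; simpl in *.
           subst. exists y'; auto.
        -- intros y' HP.
           assert (Hst : rdjoin_lts trP trE (y, e1) (a, e') (y', e'))
             by (repeat split; auto).
           destruct (Hs' _ _ _ _ H Hst) as [[x' e''] [[H1 [H2 H3]] H4]]; simpl in *.
           subst. exists x'; auto.
        -- intros x' HP; subst; exists x'; auto.
        -- intros y' HP; subst; exists y'; auto.
      * auto.
  - intros [R [[[Hne Hs] [Hne' Hs']] HR]]. exists R. split; [split; split|]; auto.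
    + intros [x e1] [y e2] a [x' e'] xr [H1 H2]; simpl in *.
      assert (Hst : rdjoin_lts trP trE (x, e1) (a, e') (x', e'))
        by (repeat split; auto).
      destruct (Hs _ _ _ _ xr Hst) as [[y' e''] [[G1 [G2 G3]] G4]]; simpl in *.
      subst. exists (y', e'). split; [split|]; auto.
    + intros [y e2] [x e1] a [y' e'] xr [H1 H2]; simpl in *.
      assert (Hst : rdjoin_lts trP trE (y, e2) (a, e') (y', e'))
        by (repeat split; auto).
      destruct (Hs' _ _ _ _ xr Hst) as [[x' e''] [[G1 [G2 G3]] G4]]; simpl in *.
      subst. exists (x', e'). split; [split|]; auto.
  - unfold ji_bisimilar; tauto.
Qed.
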